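(* Let $n\ge 3$ be odd and let $WC_n^d$ denote the fully whiskered $n$-cycle graph. Then $M_2(WC_n^d)\simeq S^{n-1}$.
   Context: The fully whiskered graph of a graph $G$ is obtained by attaching a leaf (a new vertex joined by one edge) to every vertex of $G$; $WC_n^d$ is the fully whiskered graph of the cycle on $n$ vertices. A $2$-matching of a graph is a set of edges such that every vertex has degree at most $2$ in it. $M_2(G)$ is the simplicial complex whose vertices are the edges of $G$ and whose faces are the $2$-matchings of $G$. *)

(* Defs.v *)
From HB Require Import structures.
From mathcomp Require Import all_boot all_order all_algebra.
From mathcomp Require Import all_classical all_reals topology normedtype.
Import numFieldNormedType.Exports.
Set Implicit Arguments. Unset Strict Implicit. Unset Printing Implicit Defensive.
Import Order.TTheory GRing.Theory Num.Theory.

Definition edges (V : finType) (adj : rel V) : {set {set V}} :=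
  [set e : {set V} | [exists x, exists y, adj x y && (e == [set x; y])]].

Definition two_matching_complex (V : finType) (adj : rel V)
  : {set {set {set V}}} :=
  [set F : {set {set V}} | (F \subset edges adj) &&
     [forall v : V, #|[set e in F | v \in e]| <= 2]].

(* The fully whiskered n-cycle WC_n^d: vertices inl i (cycle vertices,
   i in Z/n) and inr i (the leaf attached to inl i). *)
Definition WC_adj (n : nat) : rel ('I_n + 'I_n) :=
  fun x y => match x, y with
  | inl i, inl j => (val j == (val i).+1 %% n)%N || (val i == (val j).+1 %% n)%N
  | inl i, inr j => i == j
  | inr i, inl j => i == j
  | inr _, inr _ => false
  end.

Local Open Scope classical_set_scope.
Local Open Scope ring_scope.

Definition realization (R : realType) (T : finType) (K : {set {set T}})
  : set {ptws T -> R} :=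
  [set x | (forall t, 0 <= x t) /\ \sum_(t : T) x t = 1 /\
           exists2 F, F \in K & forall t, x t != 0 -> t \in F].

(* The sphere S^(m-1) as the unit sphere of R^m. *)
Definition sphere (R : realType) (m : nat) : set {ptws 'I_m -> R} :=
  [set x | \sum_(i < m) x i ^+ 2 = 1].

Definition homotopic_on (R : realType) (X Y : topologicalType)
  (A : set X) (B : set Y) (f g : X -> Y) : Prop :=
  exists H : R * X -> Y,
    {within `[0, 1] `*` A, continuous H} /\
    (forall t a, t \in `[0, 1] -> A a -> B (H (t, a))) /\
    (forall a, A a -> H (0, a) = f a) /\
    (forall a, A a -> H (1, a) = g a).

Definition homotopy_equivalent (R : realType) (X Y : topologicalType)
  (A : set X) (B : set Y) : Prop :=
  exists (f : X -> Y) (g : Y -> X),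
    [/\ {within A, continuous f}, {within B, continuous g},
        (forall a, A a -> B (f a)) & (forall b, B b -> A (g b))] /\
    homotopic_on R A A (g \o f) id /\ homotopic_on R B B (f \o g) id.

Arguments realization R {T} K.
Arguments sphere : clear implicits.
Arguments homotopy_equivalent R {X Y} A B.
Arguments homotopic_on R {X Y} A B f g.

(* Main.v *)
Require Import Defs.
From HB Require Import structures.
From mathcomp Require Import all_boot all_order all_algebra.
From mathcomp Require Import all_classical all_reals topology normedtype.
From mathcomp Require Import realfun lra.
From mathcomp Require Import zify.
Import numFieldNormedType.Exports.
Set Implicit Arguments. Unset Strict Implicit. Unset Printing Implicit Defensive.
Import Order.TTheory GRing.Theory Num.Theory.

Section Comb.
Variable n : nat.
Hypothesis Hn : (3 <= n)%N.
Notation V := ('I_n + 'I_n)%type.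

Definition ce (i : 'I_n) : {set V} := [set inl i; inl (ordS i)].
Definition we (i : 'I_n) : {set V} := [set inl i; inr i].

Lemma valS (i : 'I_n) : val (ordS i) = if i.+1 == n then 0%N else i.+1.
Proof.
rewrite /=; case: (i.+1 =P n) => [->|h]; first by rewrite modnn.
by rewrite modn_small //; have := ltn_ord i; lia.
Qed.

Lemma ordS_neq (i : 'I_n) : ordS i != i.
Proof.
apply/eqP => /(congr1 val); rewrite valS; case: (i.+1 =P n) => h /=; lia.
Qed.

Lemma ordSS_neq (i : 'I_n) : ordS (ordS i) != i.
Proof.
apply/eqP => /(congr1 val) /=.
have lt := ltn_ord i; case: (ltngtP i.+1 n) => h.
- rewrite (modn_small h); case: (ltngtP i.+2 n) => h2.
  + by rewrite modn_small //; lia.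
  + lia.
  + by rewrite h2 modnn; lia.
- lia.
- by rewrite h modnn modn_small //; lia.
Qed.

Lemma inl_eq (a b : 'I_n) : (inl a == inl b :> V) = (a == b).
Proof. by []. Qed.
Lemma inr_eq (a b : 'I_n) : (inr a == inr b :> V) = (a == b).
Proof. by []. Qed.

Lemma ce_inj : injective ce.
Proof.
move=> i j /setP h.
have := h (inl i); rewrite !inE !inl_eq eqxx /= => /esym /orP [/eqP //|/eqP e].
have := h (inl (ordS i)); rewrite !inE !inl_eq eqxx orbT.
move=> /esym /orP [/eqP e2|/eqP e2].
  by move: (ordSS_neq j); rewrite -e -e2 eqxx.
by move: (ordS_neq i); rewrite e2 -e eqxx.
Qed.

Lemma we_inj : injective we.
Proof.
move=> i j /setP h; have := h (inr i); rewrite !inE !inr_eq eqxx /= => /esym /eqP//.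
Qed.

Lemma ce_we (i j : 'I_n) : (ce i == we j) = false.
Proof.
apply/negbTE/eqP => /setP h; have := h (inr j); rewrite !inE eqxx /=.
by case: eqP.
Qed.

Lemma edgesP (e : {set V}) :
  e \in edges (@WC_adj n) -> (exists i, e = ce i) \/ (exists i, e = we i).
Proof.
rewrite inE => /existsP [[x|x]] /existsP [[y|y]] /andP [] /= H /eqP ->.
- case/orP: H => /eqP h.
  + by left; exists x; rewrite /ce; congr ([set _; _]); congr inl; apply: val_inj.
  + left; exists y; rewrite /ce; apply/setP => z; rewrite !inE orbC.
    by have -> : ordS y = x by apply: val_inj.
- by move/eqP: H => <-; right; exists x.
- by move/eqP: H => ->; right; exists y; apply/setP => z; rewrite /we !inE orbC.
- by [].
Qed.

Lemma ce_edge i : ce i \in edges (@WC_adj n).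
Proof.
rewrite inE; apply/existsP; exists (inl i); apply/existsP; exists (inl (ordS i)).
apply/andP; split => //; apply/orP; left; exact/eqP.
Qed.

Lemma we_edge i : we i \in edges (@WC_adj n).
Proof.
rewrite inE; apply/existsP; exists (inl i); apply/existsP; exists (inr i).
apply/andP; split => //; exact/eqP.
Qed.


Lemma inl_edge (j : 'I_n) e : e \in edges (@WC_adj n) -> inl j \in e ->
  [\/ e = ce (ord_pred j), e = ce j | e = we j].
Proof.
case/edgesP => [[i ->]|[i ->]]; rewrite !inE !inl_eq.
- case/orP => /eqP ->; first by constructor 2.
  by rewrite ordSK; constructor 1.
- by rewrite orbF => /eqP ->; constructor 3.
Qed.

Lemma inr_edge (j : 'I_n) e : e \in edges (@WC_adj n) -> inr j \in e -> e = we j.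
Proof.
by case/edgesP => [[i ->]|[i ->]]; rewrite !inE // => /eqP [->].
Qed.

Lemma ord_pred_neq (j : 'I_n) : ord_pred j != j.
Proof.
apply/eqP => h; move: (ordS_neq j); rewrite -{1}h ord_predK eqxx //.
Qed.

Lemma ce_pred_in j : inl j \in ce (ord_pred j).
Proof. by rewrite !inE ord_predK eqxx orbT. Qed.

Lemma faceP (F : {set {set V}}) :
  F \in two_matching_complex (@WC_adj n) <->
  F \subset edges (@WC_adj n) /\
  (forall j, ~~ [&& ce (ord_pred j) \in F, ce j \in F & we j \in F]).
Proof.
rewrite inE; split.
- case/andP => sub /forallP deg; split => // j; apply/negP => /and3P [h1 h2 h3].
  have := deg (inl j).
  have sub3 : ce (ord_pred j) |: [set ce j; we j] \subset [set e in F | inl j \in e].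
    apply/fintype.subsetP => e; rewrite !inE => /or3P [] /eqP ->; rewrite ?h1 ?h2 ?h3 //=.
    - exact: ce_pred_in.
    - by rewrite !inE eqxx.
    - by rewrite !inE eqxx.
  move/(leq_trans (subset_leq_card sub3)).
  rewrite cardsU1 cards2 !inE negb_or.
  have -> : (ce (ord_pred j) != ce j).
    by apply/eqP => /ce_inj /eqP; rewrite (negbTE (ord_pred_neq j)).
  by rewrite ce_we (ce_we j j).
- case=> sub H; rewrite sub /=; apply/forallP => [[j|j]].
  + have Hj := H j.
    have key : forall e, e \in F -> inl j \in e -> [\/ e = ce (ord_pred j), e = ce j | e = we j].
      by move=> e eF; apply: inl_edge; exact: (fintype.subsetP sub).
    have two : forall a b, [set e in F | inl j \in e] \subset [set a; b] ->
      (#|[set e in F | inl j \in e]| <= 2)%N.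
      move=> a b /subset_leq_card /leq_trans; apply; rewrite cards2; by case: (a != b).
    case/nandP: Hj => [h|]; last case/nandP => h.
    * apply: (two (ce j) (we j)); apply/fintype.subsetP => e; rewrite !inE => /andP [eF ej].
      by case: (key e eF ej) => E; rewrite E ?eqxx ?orbT //; move: eF h; rewrite E => ->.
    * apply: (two (ce (ord_pred j)) (we j)); apply/fintype.subsetP => e; rewrite !inE => /andP [eF ej].
      by case: (key e eF ej) => E; rewrite E ?eqxx ?orbT //; move: eF h; rewrite E => ->.
    * apply: (two (ce (ord_pred j)) (ce j)); apply/fintype.subsetP => e; rewrite !inE => /andP [eF ej].
      by case: (key e eF ej) => E; rewrite E ?eqxx ?orbT //; move: eF h; rewrite E => ->.
  + apply: (@leq_trans #|[set we j]|); last by rewrite cards1.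
    apply: subset_leq_card; apply/fintype.subsetP => e; rewrite !inE => /andP [eF ej].
    by rewrite (inr_edge (fintype.subsetP sub _ eF) ej).
Qed.

End Comb.

Local Open Scope classical_set_scope.
Local Open Scope ring_scope.

Lemma ptws_cvg (X : Type) (F : set_system X) (FF : Filter F) (T : Type) (R : realType)
  (G : X -> {ptws T -> R}) (g : {ptws T -> R}) :
  (forall t, (fun y => G y t) @ F --> g t) -> G @ F --> g.
Proof.
move=> H.
apply/cvg_sup => i.
apply/cvg_image.
- by rewrite classical_sets.eqEsubset; split => // y _; exists (fun _ => y).
move=> B /= /H HB.
exists ((fun f : T -> R => f i) @^-1` B) => //.
by rewrite classical_sets.eqEsubset; split => [y [f ? <-]//|y By]; exists (fun _ => y).
Qed.

Lemma ptws_proj_cont (T : eqType) (R : realType) (t : T) :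
  continuous (fun x : {ptws T -> R} => x t).
Proof. exact: (@proj_continuous T (fun _ => R) t). Qed.

Lemma ptws_cont_at (Z : topologicalType) (T : Type) (R : realType)
  (G : Z -> {ptws T -> R}) (z : Z) :
  (forall t, {for z, continuous (fun y => G y t)}) -> {for z, continuous G}.
Proof. by move=> h; apply: ptws_cvg. Qed.

Lemma fst_cont (A B : topologicalType) (p : A * B) :
  {for p, continuous (fun q : A * B => q.1)}.
Proof. by case: p => a b; exact: cvg_fst. Qed.

Lemma snd_cont (A B : topologicalType) (p : A * B) :
  {for p, continuous (fun q : A * B => q.2)}.
Proof. by case: p => a b; exact: cvg_snd. Qed.

Section Cont.
Variables (R : realType) (Z : topologicalType).
Implicit Types (f g : Z -> R) (z : Z).

Lemma cD f g z : {for z, continuous f} -> {for z, continuous g} ->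
  {for z, continuous (fun y => f y + g y)}.
Proof. exact: continuousD. Qed.
Lemma cB f g z : {for z, continuous f} -> {for z, continuous g} ->
  {for z, continuous (fun y => f y - g y)}.
Proof. exact: continuousB. Qed.
Lemma cM f g z : {for z, continuous f} -> {for z, continuous g} ->
  {for z, continuous (fun y => f y * g y)}.
Proof. exact: continuousM. Qed.
Lemma cC (c : R) z : {for z, continuous (fun _ : Z => c)}.
Proof. exact: cvg_cst. Qed.
Lemma cMin f g z : {for z, continuous f} -> {for z, continuous g} ->
  {for z, continuous (fun y => Num.min (f y) (g y))}.
Proof. exact: continuous_min. Qed.
Lemma cMax f g z : {for z, continuous f} -> {for z, continuous g} ->
  {for z, continuous (fun y => Num.max (f y) (g y))}.
Proof. exact: continuous_max. Qed.
Lemma cV f z : f z != 0 -> {for z, continuous f} ->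
  {for z, continuous (fun y => (f y)^-1)}.
Proof. exact: continuousV. Qed.
Lemma cNorm f z : {for z, continuous f} -> {for z, continuous (fun y => `|f y|)}.
Proof. move=> h; apply: continuous_comp h _; exact: norm_continuous. Qed.
Lemma cSqrt f z : {for z, continuous f} -> {for z, continuous (fun y => Num.sqrt (f y))}.
Proof. move=> h; apply: continuous_comp h _; exact: sqrt_continuous. Qed.
Lemma cSum (I : Type) (r : seq I) (P : pred I) (F : I -> Z -> R) z :
  (forall i, {for z, continuous (F i)}) ->
  {for z, continuous (fun y => \sum_(i <- r | P i) F i y)}.
Proof.
move=> h; elim: r => [|a r IH].
  have -> : (fun y => \sum_(i <- [::] | P i) F i y) = (fun _ => 0).
    by apply: funext => y; rewrite big_nil.
  exact: cC.
have -> : (fun y => \sum_(i <- a :: r | P i) F i y) =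
  (fun y => if P a then F a y + \sum_(i <- r | P i) F i y else \sum_(i <- r | P i) F i y).
  by apply: funext => y; rewrite big_cons.
case: (P a); last exact: IH.
exact: cD.
Qed.
End Cont.

Section Main.
Variables (R : realType) (n : nat).
Hypothesis Hn : (3 <= n)%N.
Notation V := ('I_n + 'I_n)%type.
Notation T := {set V}.
Notation X := {ptws T -> R}.
Notation Y := {ptws 'I_n -> R}.

Definition mm (x : X) (i : 'I_n) : R := Num.min (x (ce i)) (x (we i)).
Definition dd (x : X) (i : 'I_n) : R := x (ce i) - x (we i) - 2 * mm x (ordS i).
Definition nrm2 (v : 'I_n -> R) : R := Num.sqrt (\sum_i v i ^+ 2).
Definition fmap (x : X) : Y := fun i => dd x i / nrm2 (dd x).
Definition pos (r : R) := (`|r| + r) / 2.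
Definition neg (r : R) := (`|r| - r) / 2.
Definition n1 (s : 'I_n -> R) : R := \sum_i `|s i|.
Definition gmap (s : Y) : X := fun t =>
  (\sum_i ((t == ce i)%:R * pos (s i) + (t == we i)%:R * neg (s i))) / n1 s.

Lemma cont_coord (t : T) (x : X) : {for x, continuous (fun y : X => y t)}.
Proof. exact: ptws_proj_cont. Qed.

Lemma cont_dd (i : 'I_n) (x : X) : {for x, continuous (fun y : X => dd y i)}.
Proof.
rewrite /dd /mm.
apply: cB; first (apply: cB; exact: cont_coord).
apply: cM; first exact: cC.
apply: cMin; exact: cont_coord.
Qed.

Lemma cont_fmap (x : X) : nrm2 (dd x) != 0 -> {for x, continuous fmap}.
Proof.
move=> nz; apply: ptws_cont_at => i.
rewrite /fmap.
apply: cM; first exact: cont_dd.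
apply: cV => //.
apply: cSqrt; apply: cSum => j.
have -> : (fun y : X => dd y j ^+ 2) = (fun y => dd y j * dd y j).
  by apply: funext => y; rewrite expr2.
apply: cM; exact: cont_dd.
Qed.

Lemma cont_gmap (s : Y) : n1 s != 0 -> {for s, continuous gmap}.
Proof.
move=> nz; apply: ptws_cont_at => t.
rewrite /gmap.
apply: cM; last first.
  apply: cV => //; apply: cSum => j; apply: cNorm; exact: ptws_proj_cont.
apply: cSum => j; apply: cD; apply: cM; try exact: cC.
- apply: cM; last exact: cC.
  by apply: cD; [apply: cNorm|]; exact: ptws_proj_cont.
- apply: cM; last exact: cC.
  by apply: cB; [apply: cNorm|]; exact: ptws_proj_cont.
Qed.

Lemma sum_ind (I : finType) (j : I) (F : I -> R) :
  \sum_i (i == j)%:R * F i = F j.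
Proof.
rewrite (bigD1 j) //= eqxx mul1r big1 ?addr0 // => i /negbTE ->.
by rewrite mul0r.
Qed.

Lemma absE (r : R) : (0 <= r /\ `|r| = r) \/ (r < 0 /\ `|r| = - r).
Proof.
case: (boolP (0 <= r)) => h; first by left; rewrite ger0_norm.
by rewrite -ltNge in h; right; rewrite ltr0_norm.
Qed.

Lemma pos_ge0 r : 0 <= pos r.
Proof. by rewrite /pos; case: (absE r) => [[h ->]|[h ->]]; lra. Qed.
Lemma neg_ge0 r : 0 <= neg r.
Proof. by rewrite /neg; case: (absE r) => [[h ->]|[h ->]]; lra. Qed.
Lemma pos_gt0 r : (0 < pos r) = (0 < r).
Proof.
rewrite /pos; case: (absE r) => [[h ->]|[h ->]]; apply/idP/idP; lra.
Qed.
Lemma neg_gt0 r : (0 < neg r) = (r < 0).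
Proof.
rewrite /neg; case: (absE r) => [[h ->]|[h ->]]; apply/idP/idP; lra.
Qed.
Lemma pos_neg r : pos r - neg r = r.
Proof. by rewrite /pos /neg; lra. Qed.
Lemma pos_add_neg r : pos r + neg r = `|r|.
Proof. by rewrite /pos /neg; lra. Qed.
Lemma pos_neg_min r (c : R) : 0 < c -> Num.min (pos r / c) (neg r / c) = 0.
Proof.
move=> c0; rewrite /pos /neg; case: (absE r) => [[h ->]|[h ->]].
- have -> : (r - r) / 2 / c = 0 by rewrite subrr !mul0r.
  apply/min_idPr; apply: divr_ge0; [apply: divr_ge0; lra | exact: ltW].
- have -> : (- r + r) / 2 / c = 0 by rewrite addNr !mul0r.
  apply/min_idPl; apply: divr_ge0; [apply: divr_ge0; lra | exact: ltW].
Qed.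

Lemma gmap_ce (s : Y) j : gmap s (ce j) = pos (s j) / n1 s.
Proof.
rewrite /gmap; congr (_ / _).
rewrite (eq_bigr (fun i => (i == j)%:R * pos (s i))) ?sum_ind // => i _.
by rewrite (inj_eq (ce_inj Hn)) eq_sym ce_we mul0r addr0.
Qed.

Lemma gmap_we (s : Y) j : gmap s (we j) = neg (s j) / n1 s.
Proof.
rewrite /gmap; congr (_ / _).
rewrite (eq_bigr (fun i => (i == j)%:R * neg (s i))) ?sum_ind // => i _.
have -> : (we j == ce i) = false by rewrite eq_sym ce_we.
by rewrite (inj_eq (@we_inj n)) eq_sym mul0r add0r.
Qed.

Lemma n1_ge0 (s : Y) : 0 <= n1 s.
Proof. by apply: sumr_ge0 => i _. Qed.

Lemma gmap_ge0 (s : Y) t : 0 <= gmap s t.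
Proof.
rewrite /gmap divr_ge0 ?n1_ge0 //; apply: sumr_ge0 => i _.
by rewrite addr_ge0 // mulr_ge0 ?ler0n ?pos_ge0 ?neg_ge0.
Qed.

Lemma gmap_sum (s : Y) : n1 s != 0 -> \sum_t gmap s t = 1.
Proof.
move=> nz; rewrite /gmap -mulr_suml exchange_big /=.
rewrite (eq_bigr (fun i => `|s i|)) ?divff // => i _.
rewrite big_split /= -pos_add_neg; congr (_ + _).
- exact: (sum_ind (ce i) (fun _ => pos (s i))).
- exact: (sum_ind (we i) (fun _ => neg (s i))).
Qed.

Definition Fs (s : Y) : {set T} :=
  [set t | [exists i, ((t == ce i) && (0 < s i)) || ((t == we i) && (s i < 0))]].

Lemma Fs_ce (s : Y) j : (ce j \in Fs s) = (0 < s j).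
Proof.
rewrite inE; apply/existsP/idP => [[i]|h]; last by exists j; rewrite eqxx h.
by rewrite (inj_eq (ce_inj Hn)) ce_we /= orbF => /andP [/eqP -> ].
Qed.

Lemma Fs_we (s : Y) j : (we j \in Fs s) = (s j < 0).
Proof.
rewrite inE; apply/existsP/idP => [[i]|h]; last by exists j; rewrite eqxx h orbT.
by rewrite (inj_eq (@we_inj n)) eq_sym ce_we /= => /andP [/eqP -> ].
Qed.

Lemma Fs_face (s : Y) : Fs s \in two_matching_complex (@WC_adj n).
Proof.
apply/(faceP Hn); split.
- apply/fintype.subsetP => t; rewrite inE => /existsP [i] /orP [] /andP [/eqP -> _].
  + exact: ce_edge.
  + exact: we_edge.
- move=> j; rewrite !Fs_ce Fs_we; apply/negP => /and3P [_ h1 h2].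
  by have := lt_trans h1 h2; rewrite ltxx.
Qed.

Lemma gmap_supp (s : Y) t : gmap s t != 0 -> t \in Fs s.
Proof.
apply: contraR => h; rewrite /gmap big1 ?mul0r // => i _.
have [/eqP E|] := boolP (t == ce i).
  rewrite E in h *; rewrite ce_we mul0r addr0 mul1r; move: h; rewrite Fs_ce -pos_gt0.
  by move/negbTE; rewrite lt_def pos_ge0 andbT => /negbFE /eqP.
move=> _; rewrite mul0r add0r.
have [/eqP E|_] := boolP (t == we i); last by rewrite mul0r.
rewrite E in h *; rewrite mul1r; move: h; rewrite Fs_we -neg_gt0.
by move/negbTE; rewrite lt_def neg_ge0 andbT => /negbFE /eqP.
Qed.


Notation K := (two_matching_complex (@WC_adj n)).

Lemma mm_ge0 (x : X) i : (forall t, 0 <= x t) -> 0 <= mm x i.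
Proof. by move=> h; rewrite /mm le_min !h. Qed.

Lemma mm_gt0 (x : X) i : (0 < mm x i) = (0 < x (ce i)) && (0 < x (we i)).
Proof. by rewrite /mm lt_min. Qed.

Lemma neq0_gt0 (r : R) : 0 <= r -> (r != 0) = (0 < r).
Proof. by move=> h; rewrite lt_def h andbT. Qed.

Lemma key_mm (x : X) (F : {set T}) : F \in K ->
  (forall t, 0 <= x t) -> (forall t, x t != 0 -> t \in F) ->
  forall i, 0 < mm x (ordS i) -> x (ce i) = 0.
Proof.
move=> /(faceP Hn) [_ HF] x0 xF i; rewrite mm_gt0 => /andP [h1 h2].
apply/eqP; apply: contraT => h3.
have c1 : ce i \in F := xF _ h3.
have c2 : ce (ordS i) \in F := xF _ (lt0r_neq0 h1).
have c3 : we (ordS i) \in F := xF _ (lt0r_neq0 h2).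
by have := HF (ordS i); rewrite ordSK c1 c2 c3.
Qed.


Lemma dd_nz (x : X) : realization R K x -> nrm2 (dd x) != 0.
Proof.
move=> [x0 [xs [F FK xF]]].
rewrite /nrm2 sqrtr_eq0 -ltNge.
rewrite lt_def sumr_ge0 ?andbT; last by move=> i _; exact: sqr_ge0.
apply/eqP => H0.
have H := psumr_eq0P (fun j _ => sqr_ge0 (dd x j)) H0.
have d0 : forall i, dd x i = 0.
  by move=> i; apply/eqP; rewrite -sqrf_eq0; apply/eqP; apply: H.
have m0 : forall i, mm x (ordS i) = 0.
  move=> i; apply/eqP; rewrite eq_le mm_ge0 // andbT leNgt; apply/negP => h.
  have := d0 i; rewrite /dd (key_mm FK x0 xF h) => e.
  have := x0 (we i); lra.
have m0' : forall i, mm x i = 0 by move=> i; rewrite -[i]ord_predK; exact: m0.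
have ab : forall i, x (ce i) = 0 /\ x (we i) = 0.
  move=> i; have := d0 i; rewrite /dd m0 mulr0 subr0 => /eqP; rewrite subr_eq0 => /eqP e.
  by have := m0' i; rewrite /mm e minxx => h; split => //; rewrite e.
have xt : forall t, x t = 0.
  move=> t; apply/eqP; apply: contraT => nz; have tF := xF _ nz.
  move: (FK) => /(faceP Hn) [sub _].
  case: (edgesP (fintype.subsetP sub _ tF)) => [[i E]|[i E]]; move: nz; rewrite E;
    by case: (ab i) => A B; rewrite ?A ?B eqxx.
by move: xs; rewrite big1 // => /eqP; rewrite eq_sym oner_eq0.
Qed.


Lemma nrm2_gt0 (x : X) : realization R K x -> 0 < nrm2 (dd x).
Proof. by move=> h; rewrite lt_def dd_nz // sqrtr_ge0. Qed.

Lemma fmap_sphere (x : X) : realization R K x -> sphere R n (fmap x).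
Proof.
move=> h; have nz := dd_nz h.
rewrite /sphere /mkset /fmap.
rewrite (eq_bigr (fun i => dd x i ^+ 2 * (nrm2 (dd x))^-1 ^+ 2)); last first.
  by move=> i _; rewrite exprMn.
rewrite -mulr_suml.
have -> : \sum_i dd x i ^+ 2 = nrm2 (dd x) ^+ 2.
  by rewrite /nrm2 sqr_sqrtr // sumr_ge0 // => i _; exact: sqr_ge0.
by rewrite -exprMn mulfV // expr1n.
Qed.

Lemma n1_nz_sphere (s : Y) : sphere R n s -> n1 s != 0.
Proof.
rewrite /sphere /mkset => hs; apply/eqP => H0.
have H := psumr_eq0P (fun j _ => normr_ge0 (s j)) H0.
move: hs; rewrite big1 => [/eqP|i _]; first by rewrite eq_sym oner_eq0.
by have /eqP := H i isT; rewrite normr_eq0 => /eqP ->; rewrite expr0n.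
Qed.

Lemma gmap_K (s : Y) : n1 s != 0 -> realization R K (gmap s).
Proof.
move=> nz; split; first exact: gmap_ge0.
split; first exact: gmap_sum.
by exists (Fs s); [exact: Fs_face | move=> t; exact: gmap_supp].
Qed.

Lemma fmap_gmap (s : Y) : sphere R n s -> fmap (gmap s) = s.
Proof.
move=> hs0; have nz := n1_nz_sphere hs0.
have hs : \sum_i s i ^+ 2 = 1 := hs0.
have N0 : 0 < n1 s by rewrite lt_def nz n1_ge0.
have dg : forall i, dd (gmap s) i = s i / n1 s.
  move=> i; rewrite /dd /mm !gmap_ce !gmap_we pos_neg_min // mulr0 subr0.
  by rewrite -mulrBl pos_neg.
apply: funext => i; rewrite /fmap /nrm2 dg.
rewrite (eq_bigr (fun j => s j ^+ 2 * (n1 s)^-1 ^+ 2)); last first.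
  by move=> j _; rewrite dg exprMn.
rewrite -mulr_suml hs mul1r sqrtr_sqr ger0_norm ?invr_ge0 ?n1_ge0 //.
by rewrite invrK -mulrA mulVf ?mulr1.
Qed.

Definition H1 (p : R * X) : X := fun u => (1 - p.1) * gmap (fmap p.2) u + p.1 * p.2 u.

Definition Fp (F : {set T}) : {set T} :=
  F :|: [set u | [exists i, (u == we i) && (ce (ordS i) \in F) && (we (ordS i) \in F)]].

Lemma Fp_ce F j : (ce j \in Fp F) = (ce j \in F).
Proof.
rewrite /Fp !inE; case: (ce j \in F) => //=.
by apply/negbTE/existsP => [[i]]; rewrite ce_we.
Qed.

Lemma Fp_we F j : (we j \in Fp F) = (we j \in F) || (ce (ordS j) \in F) && (we (ordS j) \in F).
Proof.
rewrite /Fp !inE; congr (_ || _); apply/existsP/idP => [[i]|h].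
  by rewrite (inj_eq (@we_inj n)) => /andP [/andP [/eqP -> ->] ->].
by exists j; rewrite eqxx.
Qed.

Lemma Fp_face F : F \in K -> Fp F \in K.
Proof.
move=> /(faceP Hn) [sub HF]; apply/(faceP Hn); split.
  rewrite finset.subUset sub /=; apply/fintype.subsetP => u; rewrite inE.
  by case/existsP => i /andP [/andP [/eqP -> _] _]; exact: we_edge.
move=> j; rewrite !Fp_ce Fp_we.
have := HF j; have := HF (ordS j); rewrite ordSK.
by case: (ce (ord_pred j) \in F); case: (ce j \in F); case: (we j \in F);
  case: (ce (ordS j) \in F); case: (we (ordS j) \in F).
Qed.

Lemma H1_K (t : R) (x : X) : 0 <= t <= 1 -> realization R K x ->
  realization R K (H1 (t, x)).
Proof.
move=> /andP [t0 t1] Kx.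
have ns := n1_nz_sphere (fmap_sphere Kx).
have nu := nrm2_gt0 Kx.
case: (Kx) => [x0 [xs [F FK xF]]].
split.
  move=> u; rewrite /H1 /=; apply: addr_ge0; apply: mulr_ge0 => //.
  - by rewrite subr_ge0.
  - exact: gmap_ge0.
split.
  rewrite /H1 /= big_split /= -!mulr_sumr gmap_sum // xs; lra.
exists (Fp F); first exact: Fp_face.
move=> u; rewrite /H1 /=.
have [xu|/negPn/eqP xu] := boolP (x u != 0).
  by move=> _; rewrite /Fp inE (xF _ xu).
rewrite xu mulr0 addr0 mulf_eq0 negb_or => /andP [_ /gmap_supp].
rewrite inE => /existsP [i] /orP [] /andP [/eqP -> h].
- rewrite Fp_ce; apply: xF; move: h; rewrite /fmap pmulr_lgt0 ?invr_gt0 // /dd => h.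
  have := x0 (we i); have := mm_ge0 (ordS i) x0; move=> h1 h2.
  by rewrite gt_eqF //; lra.
- rewrite Fp_we; move: h; rewrite /fmap pmulr_llt0 ?invr_gt0 // /dd => h.
  have [wi|/negPn/eqP wi] := boolP (x (we i) != 0); first by rewrite xF.
  have : 0 < mm x (ordS i).
    have := x0 (ce i); have := mm_ge0 (ordS i) x0; move=> h1 h2; lra.
  rewrite mm_gt0 => /andP [h1 h2].
  by rewrite (xF _ (lt0r_neq0 h1)) (xF _ (lt0r_neq0 h2)) orbT.
Qed.

End Main.


Theorem mainTheorem7 (R : realType) (n : nat) :
  (3 <= n)%N -> odd n ->
  homotopy_equivalent R
    (realization R (two_matching_complex (@WC_adj n)))
    (sphere R n).
Proof.
move=> Hn _.
exists (@fmap R n), (@gmap R n).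
split; [split|split].
- apply: continuous_in_subspaceT => x /set_mem Ax.
  exact: cont_fmap (dd_nz Hn Ax).
- apply: continuous_in_subspaceT => s /set_mem Bs.
  exact: cont_gmap (n1_nz_sphere Bs).
- by move=> x Ax; exact: fmap_sphere.
- by move=> s Bs; exact: (gmap_K Hn (n1_nz_sphere Bs)).
- exists (@H1 R n); split; [|split; [|split]].
  + apply: continuous_in_subspaceT => p /set_mem [pt px].
    apply: ptws_cont_at => u; rewrite /H1.
    have c1 : {for p, continuous (fun q : R * {ptws {set ('I_n + 'I_n)%type} -> R} => fmap q.2)}.
      exact: continuous_comp (@snd_cont _ _ p) (cont_fmap (dd_nz Hn px)).
    have c2 : {for p, continuous (fun q : R * {ptws {set ('I_n + 'I_n)%type} -> R} => gmap (fmap q.2))}.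
      exact: continuous_comp c1 (cont_gmap (n1_nz_sphere (fmap_sphere Hn px))).
    have c3 : {for p, continuous (fun q : R * {ptws {set ('I_n + 'I_n)%type} -> R} => gmap (fmap q.2) u)}.
      exact: (continuous_comp c2 (@cont_coord R n u _)).
    have c4 : {for p, continuous (fun q : R * {ptws {set ('I_n + 'I_n)%type} -> R} => q.2 u)}.
      exact: (continuous_comp (@snd_cont _ _ p) (@cont_coord R n u _)).
    apply: cD; apply: cM => //; last exact: fst_cont.
    by apply: cB; [exact: cC | exact: fst_cont].
  + move=> t a; rewrite in_itv /= => ht Aa; exact: H1_K.
  + move=> a _; apply: funext => u; rewrite /H1 /=.
    by rewrite subr0 mul1r mul0r addr0.
  + move=> a _; apply: funext => u; rewrite /H1 /=.
    by rewrite subrr mul0r add0r mul1r.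
- exists (fun p : R * {ptws 'I_n -> R} => p.2); split; [|split; [|split]].
  + apply: continuous_subspaceT => p; exact: snd_cont.
  + by move=> t s _.
  + by move=> s Bs /=; rewrite fmap_gmap.
  + by [].
Qed.
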